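(* Let $\varphi_1$ and $\varphi_2$ be two $\mathbb{T}$-gains on a connected graph $G$ with $n$ vertices and $m$ edges. Let $T$ be a normal spanning tree of $G$ such that $\varphi_1(\overrightarrow{C_j(T)})=\varphi_2(\overrightarrow{C_j(T)})$ for all $j=1,\dots,m-n+1$. Then $A(\Phi_1)$ and $A(\Phi_2)$ have the same spectrum, i.e. $\Phi_1=(G,\varphi_1)$ and $\Phi_2=(G,\varphi_2)$ are $\mathbb{T}$-cospectral.
   Context: Graphs are finite, simple and undirected, $V(G)=\{v_1,\dots,v_n\}$. $\mathbb{T}=\{z\in\mathbb{C}:|z|=1\}$. A $\mathbb{T}$-gain on $G$ is a map $\varphi$ from oriented edges to $\mathbb{T}$ with $\varphi(\overrightarrow{e_{ts}})=\varphi(\overrightarrow{e_{st}})^{-1}$; $\Phi=(G,\varphi)$ is a $\mathbb{T}$-gain graph, with adjacency matrix $A(\Phi)$ the $n\times n$ Hermitian matrix whose $(s,t)$ entry is $\varphi(\overrightarrow{e_{st}})$ if $v_s\sim v_t$ and $0$ otherwise. Two $\mathbb{T}$-gain graphs are $\mathbb{T}$-cospectral if their adjacency matrices have the same spectrum. The gain of a directed cycle is the product of gains of its oriented edges. A rooted spanning tree $T$ with root $v_r$ induces the tree order ($v_x\le v_y$ iff $v_x$ lies on the $T$-path from $v_r$ to $v_y$); $T$ is normal if adjacent vertices of $G$ are always comparable. The suitably oriented graph $\overrightarrow{G_T}$ orients each edge $e_{st}$ with $v_s\le v_t$ as $\overrightarrow{e_{st}}$ if $e_{st}\in E(T)$ and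 as $\overrightarrow{e_{ts}}$ otherwise. Each of the $m-n+1$ non-tree edges creates a unique fundamental cycle with $T$, a directed cycle $\overrightarrow{C_j(T)}$ in $\overrightarrow{G_T}$. *)

(* Defs.v *)
From HB Require Import structures.
From mathcomp Require Import all_boot all_order all_algebra.
From mathcomp Require Import complex.
From mathcomp Require Import reals.
Set Implicit Arguments. Unset Strict Implicit. Unset Printing Implicit Defensive.
Import Order.TTheory GRing.Theory Num.Theory.
Local Open Scope ring_scope.

(* Simple graphs on the vertex set 'I_n (vertex v_i is the ordinal i),
   given by an adjacency relation e. *)
Definition simple_graph (n : nat) (e : rel 'I_n) : Prop :=
  irreflexive e /\ symmetric e.

Definition connected_graph (n : nat) (e : rel 'I_n) : Prop :=
  forall x y : 'I_n, connect e x y.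

(* A T-gain: phi s t is the gain of the oriented edge e_st (from v_s to v_t);
   it has modulus 1 and phi t s = (phi s t)^-1 on every edge.
   Values on non-adjacent pairs are irrelevant. *)
Definition T_gain (R : realType) (n : nat) (e : rel 'I_n)
  (phi : 'I_n -> 'I_n -> R[i]) : Prop :=
  forall s t, e s t -> `|phi s t| = 1 /\ phi t s = (phi s t)^-1.

Definition gain_adj (R : realType) (n : nat) (e : rel 'I_n)
  (phi : 'I_n -> 'I_n -> R[i]) : 'M[R[i]]_n :=
  \matrix_(s, t) (if e s t then phi s t else 0).

(* Acyclic: no (simple) cycle x, p_1, ..., p_k, x with k >= 2 distinct
   vertices (simple graph, so cycles have length >= 3). *)
Definition acyclic (n : nat) (tr : rel 'I_n) : Prop :=
  forall (x : 'I_n) (p : seq 'I_n),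
    (1 < size p)%N -> path tr x p -> uniq (x :: p) -> ~~ tr (last x p) x.

Definition spanning_tree (n : nat) (e tr : rel 'I_n) : Prop :=
  symmetric tr /\ subrel tr e /\ connected_graph tr /\ acyclic tr.

(* Tree order of the rooted spanning tree (tr, r):
   x <= y iff x lies on the tree path from the root r to y. *)
Definition tree_le (n : nat) (tr : rel 'I_n) (r x y : 'I_n) : Prop :=
  exists p : seq 'I_n,
    [/\ path tr r p, uniq (r :: p), last r p = y & x \in r :: p].

Definition normal_tree (n : nat) (e tr : rel 'I_n) (r : 'I_n) : Prop :=
  forall x y, e x y -> tree_le tr r x y \/ tree_le tr r y x.

Fixpoint walk_gain (R : realType) (n : nat) (phi : 'I_n -> 'I_n -> R[i])
  (x : 'I_n) (p : seq 'I_n) : R[i] :=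
  match p with
  | [::] => 1
  | y :: p' => phi x y * walk_gain phi y p'
  end.

(* Gain of the fundamental directed cycle C(T) created by the non-tree edge
   {v_s, v_t} with v_s <= v_t in the suitably oriented graph: the tree path
   from v_s down to v_t (tree edges oriented away from the root), followed by
   the non-tree edge oriented e_ts.  Here p is the tree path s, p_1, ..., t. *)
Definition fund_cycle_gain (R : realType) (n : nat)
  (phi : 'I_n -> 'I_n -> R[i]) (s t : 'I_n) (p : seq 'I_n) : R[i] :=
  walk_gain phi s p * phi t s.

(* Main.v *)
Require Import Defs.
From HB Require Import structures.
From mathcomp Require Import all_boot all_order all_algebra.
From mathcomp Require Import complex.
From mathcomp Require Import reals.
Import Order.TTheory GRing.Theory Num.Theory.
Local Open Scope ring_scope.
From mathcomp Require Import ring.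


Lemma first_common {T : eqType} {s t : seq T} : has (mem t) s ->
  exists p1 c p2, [/\ s = p1 ++ c :: p2, c \in t & ~~ has (mem t) p1].
Proof.
move=> h; case: (split_find h) => c s1 s2 Hc Hn.
by exists s1, c, s2; rewrite cat_rcons.
Qed.

Lemma mem_split {T : eqType} {c : T} {s} : c \in s -> exists s1 s2, s = s1 ++ c :: s2.
Proof. by case/splitPr => s1 s2; exists s1, s2. Qed.

Lemma tree_path_unique n (tr : rel 'I_n) : symmetric tr -> acyclic tr ->
  forall x p q, path tr x p -> uniq (x :: p) -> path tr x q -> uniq (x :: q) ->
  last x p = last x q -> p = q.
Proof.
move=> sym acy x p; elim: p x => [|a p IH] x [|b q] //.
- move=> _ _ _ /andP[xn _] /= E; exfalso; move: xn.
  by rewrite E mem_last.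
- move=> _ /andP[xn _] _ _ /= E; exfalso; move: xn.
  by rewrite -E mem_last.
move=> /andP[xa pa] /andP[xn ua] /andP[xb pb] /andP[xnq ub] /= E.
case: (eqVneq a b) => [ab|neq].
  by subst b; congr (_ :: _); apply: (IH a).
exfalso.
have hs : has (mem (b :: q)) (a :: p).
  by apply/hasP; exists (last a p); [exact: mem_last | rewrite /= E mem_last].
have [p1 [c [p2 [Ep Hc Hn]]]] := first_common hs.
have [q1 [q2 Eq]] := mem_split Hc.
have Px : path tr x (p1 ++ c :: p2) by rewrite -Ep /= xa.
have Qx : path tr x (q1 ++ c :: q2) by rewrite -Eq /= xb.
have Ux : uniq (x :: p1 ++ c :: p2) by rewrite -Ep /= xn.
have Uq : uniq (x :: q1 ++ c :: q2) by rewrite -Eq /= xnq.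
move: Px; rewrite cat_path /= => /and3P[Pp1 Hlp _].
move: Qx; rewrite cat_path /= => /and3P[Pq1 Hlq _].
move: Ux; rewrite /= mem_cat in_cons negb_or cat_uniq /= => /and5P[/andP[xp1 /norP[xc _]] up1 /norP[cp1 _] _ _].
move: Uq; rewrite /= mem_cat in_cons negb_or cat_uniq /= => /and5P[/andP[xq1 _] uq1 /norP[cq1 _] _ _].
have disj : forall z, z \in p1 -> z \notin q1.
  move=> z zp; apply/negP => zq; move/negP: Hn; apply; apply/hasP; exists z => //.
  by rewrite /= Eq mem_cat zq.
set L := rcons (rev q1) x ++ p1.
have := acy c L.
have -> : path tr c L.
  rewrite cat_path last_rcons Pp1 andbT.
  have := rev_path tr x (rcons q1 c).
  rewrite belast_rcons last_rcons rev_cons => ->.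
  rewrite (eq_path (e' := tr)); last by move=> u v; rewrite /= sym.
  by rewrite rcons_path Pq1 Hlq.
have -> : uniq (c :: L).
  rewrite /L /= mem_cat mem_rcons in_cons mem_rev negb_or negb_or cq1 cp1 eq_sym xc /=.
  rewrite cat_uniq rcons_uniq mem_rev xq1 rev_uniq uq1 up1 /= andbT.
  apply/hasPn => z zp; rewrite /= mem_rcons in_cons mem_rev negb_or disj // andbT.
  by apply/eqP => zx; move: xp1; rewrite -zx zp.
have -> : (1 < size L)%N.
  rewrite /L size_cat size_rcons size_rev.
  case: q1 Eq {Pq1 Hlq xq1 cq1 uq1 disj L} => [|y q1] Eq; last by rewrite addSn.
  case: p1 Ep {Pp1 Hlp xp1 cp1 up1 Hn} => [|y p1] Ep; last by rewrite addnS.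
  by move: Ep Eq => /= [Ea _] [Eb _]; rewrite Ea Eb eqxx in neq.
rewrite /L last_cat last_rcons.
by move=> /(_ isT isT isT); rewrite Hlp.
Qed.

Lemma char_poly_conj (F : comNzRingType) m (A D D' : 'M[F]_m) :
  D' *m D = 1%:M -> char_poly (D' *m A *m D) = char_poly A.
Proof.
move=> h; rewrite /char_poly /char_poly_mx !map_mxM.
set mD := map_mx _ D; set mD' := map_mx _ D'; set mA := map_mx _ A.
have hm : mD' *m mD = 1%:M by rewrite -map_mxM h map_mx1.
have -> : 'X%:M - (mD' *m mA *m mD) = mD' *m ('X%:M - mA) *m mD.
  rewrite mulmxBr mulmxBl; congr (_ - _).
  by rewrite mul_mx_scalar -scalemxAl hm scalemx1.
by rewrite !det_mulmx mulrAC -det_mulmx hm det1 mul1r.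
Qed.

Lemma walk_gain_rcons (R : realType) n (phi : 'I_n -> 'I_n -> R[i]) x p y :
  walk_gain phi x (rcons p y) = walk_gain phi x p * phi (last x p) y.
Proof.
elim: p x => [|a p IH] x /=; first by rewrite mul1r mulr1.
by rewrite IH mulrA.
Qed.

Lemma walk_gain_norm {R : realType} {n} {e tr : rel 'I_n} {phi : 'I_n -> 'I_n -> R[i]} :
  subrel tr e -> T_gain e phi -> forall x p, path tr x p -> `|walk_gain phi x p| = 1.
Proof.
move=> sub T x p; elim: p x => [|a p IH] x /=; first by rewrite normr1.
by move/andP=> [h hp]; rewrite normrM IH // (T _ _ (sub _ _ h)).1 mulr1.
Qed.

Lemma norm1_neq0 {R : realType} {z : R[i]} : `|z| = 1 -> z != 0.
Proof.
move=> h; apply/eqP => z0; move: h; rewrite z0 normr0 => /eqP.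
by rewrite eq_sym oner_eq0.
Qed.

Lemma rel_swap {R : realType} {n} {e : rel 'I_n} {phi1 phi2 : 'I_n -> 'I_n -> R[i]}
  {d : 'I_n -> R[i]} {u v} :
  T_gain e phi1 -> T_gain e phi2 -> e u v ->
  phi2 v u * d v = phi1 v u * d u -> phi2 u v * d u = phi1 u v * d v.
Proof.
move=> T1 T2 euv.
have [n1 i1] := T1 _ _ euv; have [n2 i2] := T2 _ _ euv.
have z1 := norm1_neq0 n1; have z2 := norm1_neq0 n2.
rewrite i1 i2 => H.
have Hdu : d u = phi1 u v * ((phi2 u v)^-1 * d v).
  by rewrite H mulrA mulfV // mul1r.
rewrite Hdu; field; done.
Qed.

Theorem theorem3p2 (R : realType) (n : nat) (e : rel 'I_n)
  (phi1 phi2 : 'I_n -> 'I_n -> R[i]) (tr : rel 'I_n) (r : 'I_n) :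
  simple_graph e -> connected_graph e ->
  T_gain e phi1 -> T_gain e phi2 ->
  spanning_tree e tr -> normal_tree e tr r ->
  (* equal gains on all fundamental cycles: for every non-tree edge
     {v_s, v_t} with v_s <= v_t and the tree path p from v_s to v_t *)
  (forall (s t : 'I_n) (p : seq 'I_n),
      e s t -> ~~ tr s t -> tree_le tr r s t ->
      path tr s p -> uniq (s :: p) -> last s p = t ->
      fund_cycle_gain phi1 s t p = fund_cycle_gain phi2 s t p) ->
  char_poly (gain_adj e phi1) = char_poly (gain_adj e phi2).
Proof.
move=> [irr esym] _ T1 T2 [tsym [sub [tcon tacy]]] nt Hf.
have trirr : forall u, ~~ tr u u.
  by move=> u; apply/negP => /sub; rewrite irr.
have Pex : forall v, exists p, path tr r p && uniq (r :: p) && (last r p == v).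
  move=> v; case/connectP: (tcon r v) => p pp ->.
  case/shortenP: pp => p' pp' up' _; exists p'; by rewrite pp' up' eqxx.
pose P v := xchoose (Pex v).
have PP : forall v, [/\ path tr r (P v), uniq (r :: P v) & last r (P v) = v].
  by move=> v; have /andP[/andP[a b] /eqP c] := xchooseP (Pex v); split.
have U : forall v p, path tr r p -> uniq (r :: p) -> last r p = v -> p = P v.
  move=> v p a b c; have [a' b' c'] := PP v.
  by apply: (@tree_path_unique _ _ tsym tacy _ _ _ a b a' b'); rewrite c c'.
have ext : forall u v, tr u v -> v \notin r :: P u -> P v = rcons (P u) v.
  move=> u v tuv vn; have [a b c] := PP u; symmetry; apply: U.
  - by rewrite rcons_path a c tuv.
  - by rewrite -rcons_cons rcons_uniq vn b.
  - by rewrite last_rcons.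
have Tedge : forall u v, tr u v -> P v = rcons (P u) v \/ P u = rcons (P v) u.
  move=> u v tuv.
  case vin: (v \in r :: P u); last by left; apply: ext; rewrite ?vin.
  case uin: (u \in r :: P v); last by right; apply: ext; rewrite ?uin // tsym.
  exfalso.
  have uv : u != v by apply/eqP => E; move: tuv; rewrite E (negbTE (trirr v)).
  move: vin; rewrite in_cons => /orP[/eqP vr|vPu].
    have : [::] = P v by apply: U => //; rewrite vr.
    by move=> E; move: uin; rewrite -E mem_seq1 -vr (negbTE uv).
  have [A [B E]] := mem_split vPu.
  have [a b c] := PP u.
  move: a b c; rewrite E cat_path /= => /and3P[pA tA pB].
  rewrite cat_uniq /= => /and4P[rn uA /norP[vA hB] /andP[vB uB]].
  rewrite last_cat /= => lB.
  have PvE : rcons A v = P v.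
    apply: U; [by rewrite rcons_path pA tA | | by rewrite last_rcons].
    rewrite /= mem_rcons in_cons rcons_uniq vA uA.
    by move: rn; rewrite mem_cat in_cons; case: (r \in A); case: (r == v).
  have uB' : u \in B.
    clear -lB uv; case: B lB => [|y B] /=; first by move=> E; rewrite E eqxx in uv.
    by move=> <-; rewrite mem_last.
  move: uin; rewrite -PvE in_cons mem_rcons in_cons (negbTE uv) /= => /orP[/eqP ur|uA'].
    by move: rn; rewrite mem_cat in_cons -ur uB' !orbT.
  by move/hasP: hB; apply; exists u.
pose g (phi : 'I_n -> 'I_n -> R[i]) v := walk_gain phi r (P v).
have gn : forall phi, T_gain e phi -> forall v, g phi v != 0.
  by move=> phi T v; apply: norm1_neq0; apply: (walk_gain_norm sub T); case: (PP v).
pose d v := g phi2 v / g phi1 v.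
have dn : forall v, d v != 0.
  by move=> v; rewrite /d mulf_neq0 ?invr_eq0 ?gn.
have Rtree : forall u v, tr u v -> phi2 u v * d u = phi1 u v * d v.
  have one : forall u v, tr u v -> P v = rcons (P u) v ->
      phi2 u v * d u = phi1 u v * d v.
    move=> u v tuv E; have [_ _ lu] := PP u; rewrite /d /g E !walk_gain_rcons lu.
    have z1 := norm1_neq0 (T1 _ _ (sub _ _ tuv)).1.
    have z0 := gn _ T1 u; rewrite /g in z0.
    move: z0; set a := walk_gain phi2 _ _; set b := walk_gain phi1 _ _ => z0.
    by field; rewrite z1 z0.
  move=> u v tuv; case: (Tedge u v tuv) => E; first exact: one.
  apply: (rel_swap T1 T2 (sub _ _ tuv)); apply: one => //; by rewrite tsym.
have tele : forall x p, path tr x p ->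
    walk_gain phi2 x p * d x = walk_gain phi1 x p * d (last x p).
  move=> x p; elim: p x => [|a p IH] x /=; first by move=> _; rewrite !mul1r.
  move=> /andP[txa pa].
  by rewrite mulrAC Rtree // -[LHS]mulrA [d a * _]mulrC IH // mulrA.
have Rnon : forall s t, e s t -> ~~ tr s t -> tree_le tr r s t ->
    phi2 t s * d t = phi1 t s * d s.
  move=> s t est nst tle; have [q [pq uq lq sq]] := tle.
  have [B [pB uB lB]] : exists B, [/\ path tr s B, uniq (s :: B) & last s B = t].
    have [A [B E]] := mem_split sq.
    case: A E => [|r' A] /= [Er Eq].
      by exists B; rewrite -Er -Eq.
    move: pq uq lq; rewrite Eq cat_path last_cat /=.
    move=> /andP[_ /andP[_ pB]] /andP[_ uAB] lB; exists B; split => //.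
    by move: uAB; rewrite cat_uniq => /and3P[_ _].
  have H1 := Hf s t B est nst tle pB uB lB; rewrite /fund_cycle_gain in H1.
  have H2 := tele s B pB; rewrite lB in H2.
  have W1 := norm1_neq0 (walk_gain_norm sub T1 _ _ pB).
  apply: (mulfI W1).
  by rewrite mulrCA -H2 mulrA [phi2 t s * _]mulrC -H1 -mulrA.
have Rall : forall s t, e s t -> phi2 s t * d s = phi1 s t * d t.
  move=> s t est; case: (boolP (tr s t)) => tst; first exact: Rtree.
  case: (nt s t est) => tle.
    by apply: (rel_swap T1 T2 est); apply: Rnon.
  by apply: Rnon => //; [rewrite esym | rewrite tsym].
clearbody d.
have -> : gain_adj e phi2 =
    diag_mx (\row_j (d j)^-1) *m gain_adj e phi1 *m diag_mx (\row_j d j).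
  apply/matrixP => s t; rewrite mul_mx_diag mul_diag_mx !mxE.
  case: ifP => est; last by rewrite mulr0 mul0r.
  have H := Rall s t est; have z := dn s.
  rewrite -[phi2 s t](mulfK z) H.
  by field.
symmetry; apply: char_poly_conj.
rewrite mulmx_diag; apply/matrixP => s t; rewrite !mxE.
by rewrite mulVf.
Qed.
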